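(* In the setting of one non-elite offspring of the GA with proportional selection, uniform crossover and uniform mutation with rate $\pi_m\in(0,1/2]$, for every schema $H$, $$\alpha(H,t)\ge(1-\pi_m)^{\mathrm{ord}(H)}\alpha_{sel}(H,t)^2+2^{-\mathrm{ord}(H)}\alpha_{sel}(H,t)\big[1-\alpha_{sel}(H,t)\big]+\big[1-\alpha_{sel}(H,t)\big]^2\pi_m^{\mathrm{ord}(H)}.$$
   Context: Current population $\Psi(t)=(u^1,\dots,u^K)$, a list of $K$ elements of $\{0,1\}^d$, with fitness $f$. One offspring is generated by: drawing two parent indices $k,l$ independently, each equal to $j$ with probability $w_j=\exp(f(u^j)/2)/\sum_{i=1}^K\exp(f(u^i)/2)$; forming a child $c$ with $c_j=u^k_j$ or $u^l_j$ with probability $1/2$ each, independently over $j$; flipping each coordinate of $c$ independently with probability $\pi_m$. A schema is $H\in\{0,1,*\}^d$; fixed positions are those $j$ with $H_j\neq*$, $\mathrm{ord}(H)$ is their number; $u$ matches $H$ if $u_j=H_j$ at all fixed positions; ${\uparrow}(H)$ is the set of models matching $H$. $\alpha(H,t)$ is the probability that the offspring matches $H$, and $\alpha_{sel}(H,t)=\sum_{k:u^k\in{\uparrow}(H)}w_k$. *)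

(* Defs.v *)
From Stdlib Require Import Reals List.
Import ListNotations.
Open Scope R_scope.

(* A model is a bit string (list bool) of length d; a schema is a list of
   option bool of length d, where None stands for the wildcard '*'. *)
Definition model := list bool.
Definition schema := list (option bool).

Definition sumR (l : list R) : R := fold_right Rplus 0 l.

Fixpoint all_bits (d : nat) : list (list bool) :=
  match d with
  | O => [[]]
  | S d' => map (cons false) (all_bits d') ++ map (cons true) (all_bits d')
  end.

Fixpoint matchesb (H : schema) (u : model) : bool :=
  match H, u with
  | [], [] => true
  | h :: H', b :: u' =>
      andb (match h with None => true | Some c => Bool.eqb b c end) (matchesb H' u')
  | _, _ => false
  end.

Definition ord (H : schema) : nat :=
  length (filter (fun h => match h with Some _ => true | None => false end) H).

Fixpoint crossover (m a b : list bool) : model :=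
  match m, a, b with
  | mj :: m', aj :: a', bj :: b' => (if mj then aj else bj) :: crossover m' a' b'
  | _, _, _ => []
  end.

Fixpoint mutate (z c : list bool) : model :=
  match z, c with
  | zj :: z', cj :: c' => xorb zj cj :: mutate z' c'
  | _, _ => []
  end.

Definition count_true (z : list bool) : nat := length (filter (fun b => b) z).
Definition count_false (z : list bool) : nat := length (filter negb z).

Definition mut_prob (pm : R) (z : list bool) : R :=
  pm ^ count_true z * (1 - pm) ^ count_false z.

Definition sel_weight (f : model -> R) (pop : list model) (j : nat) : R :=
  exp (f (nth j pop []) / 2) /
  sumR (map (fun i => exp (f (nth i pop []) / 2)) (seq 0 (length pop))).

Definition alpha_sel (f : model -> R) (pop : list model) (H : schema) : R :=
  sumR (map (fun k => if matchesb H (nth k pop []) then sel_weight f pop k else 0)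
            (seq 0 (length pop))).

Definition indicator (b : bool) : R := if b then 1 else 0.

(* alpha(H,t): probability that the offspring matches H, written as the sum over
   all outcomes (parents k,l; crossover mask m, uniform over {0,1}^d; flip mask z)
   of the outcome probability times the indicator of matching H. *)
Definition alpha (d : nat) (pm : R) (f : model -> R) (pop : list model) (H : schema) : R :=
  sumR (map (fun k =>
  sumR (map (fun l =>
  sumR (map (fun m =>
  sumR (map (fun z =>
     sel_weight f pop k * sel_weight f pop l * (/ 2) ^ d * mut_prob pm z *
     indicator (matchesb H (mutate z (crossover m (nth k pop []) (nth l pop [])))))
  (all_bits d)))
  (all_bits d)))
  (seq 0 (length pop))))
  (seq 0 (length pop))).

(* Main.v *)
Require Import Defs.
From Stdlib Require Import Reals List Lra Lia.
Import ListNotations.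
Open Scope R_scope.

Lemma sumR_app l1 l2 : sumR (l1 ++ l2) = sumR l1 + sumR l2.
Proof. induction l1; simpl; [ring| rewrite IHl1; ring]. Qed.

Lemma sumR_scale_ext {A} (l : list A) f g c :
  (forall x, f x = c * g x) -> sumR (map f l) = c * sumR (map g l).
Proof. intros E; induction l; simpl; [ring| rewrite IHl, E; ring]. Qed.

Lemma sumR_lin2 {A} (l : list A) f g h c1 c2 :
  (forall x, In x l -> f x = c1 * g x + c2 * h x) ->
  sumR (map f l) = c1 * sumR (map g l) + c2 * sumR (map h l).
Proof.
  intros E; induction l; simpl; [ring|].
  rewrite IHl, E.
  - ring.
  - left; auto.
  - intros; apply E; right; auto.
Qed.

Lemma sumR_le {A} (l : list A) f g :
  (forall x, In x l -> f x <= g x) -> sumR (map f l) <= sumR (map g l).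
Proof.
  intros E; induction l; simpl; [lra|].
  assert (f a <= g a) by (apply E; left; auto).
  assert (sumR (map f l) <= sumR (map g l)) by (apply IHl; intros; apply E; right; auto).
  lra.
Qed.

Lemma sumR_pos {A} (l : list A) f :
  (forall x, In x l -> 0 < f x) -> l <> [] -> 0 < sumR (map f l).
Proof.
  intros E; induction l; simpl; intros Hn; [congruence|].
  destruct l as [|b l].
  - simpl. assert (0 < f a) by (apply E; left; auto). lra.
  - assert (0 < f a) by (apply E; left; auto).
    assert (0 < sumR (map f (b::l))) by (apply IHl; [intros; apply E; right; auto| discriminate]).
    lra.
Qed.

Lemma ind_andb a b : indicator (a && b) = indicator a * indicator b.
Proof. destruct a, b; unfold indicator; simpl; ring. Qed.

Definition test (h : option bool) (b : bool) : bool :=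
  match h with None => true | Some c => Bool.eqb b c end.

Definition inner pm (H : schema) (u v : model) (m : list bool) :=
  sumR (map (fun z => (/2)^(length H) * mut_prob pm z *
     indicator (matchesb H (mutate z (crossover m u v)))) (all_bits (length H))).

Definition Sv pm H u v := sumR (map (inner pm H u v) (all_bits (length H))).

Definition K pm h x y (b : bool) :=
  /2 * ((1 - pm) * indicator (test h (xorb false (if b then x else y)))
       + pm * indicator (test h (xorb true (if b then x else y)))).

Definition Q pm h x y := K pm h x y true + K pm h x y false.

Lemma inner_step pm h H x y u v b m :
  inner pm (h::H) (x::u) (y::v) (b::m) = K pm h x y b * inner pm H u v m.
Proof.
  unfold inner. cbn [length all_bits]. rewrite map_app, sumR_app, !map_map.
  match goal with |- sumR (map ?f1 _) + sumR (map ?f2 _) = _ =>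
  rewrite (sumR_scale_ext _ f1 (fun z => (/2)^(length H) * mut_prob pm z *
     indicator (matchesb H (mutate z (crossover m u v))))
     (/2 * (1 - pm) * indicator (test h (xorb false (if b then x else y)))));
  [rewrite (sumR_scale_ext _ f2 (fun z => (/2)^(length H) * mut_prob pm z *
     indicator (matchesb H (mutate z (crossover m u v))))
     (/2 * pm * indicator (test h (xorb true (if b then x else y)))))|] end.
  - unfold K. ring.
  - intros z. unfold mut_prob, count_true, count_false. simpl.
    unfold test; destruct h; try rewrite ind_andb; cbn [indicator]; ring.
  - intros z. unfold mut_prob, count_true, count_false. simpl.
    unfold test; destruct h; try rewrite ind_andb; cbn [indicator]; ring.
Qed.

Lemma Sv_step pm h H x y u v :
  Sv pm (h::H) (x::u) (y::v) = Q pm h x y * Sv pm H u v.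
Proof.
  unfold Sv. cbn [length all_bits]. rewrite map_app, sumR_app, !map_map.
  match goal with |- sumR (map ?f1 _) + sumR (map ?f2 _) = _ =>
  rewrite (sumR_scale_ext _ f1 (inner pm H u v) (K pm h x y false)),
    (sumR_scale_ext _ f2 (inner pm H u v) (K pm h x y true)) end.
  - unfold Q; ring.
  - intros; apply inner_step.
  - intros; apply inner_step.
Qed.

Lemma Sv_nil pm u v : Sv pm [] u v = 1.
Proof. unfold Sv, inner, mut_prob, indicator; simpl. ring. Qed.

Lemma Q_none pm x y : Q pm None x y = 1.
Proof. unfold Q, K, test, indicator; simpl. field. Qed.

Lemma Q_some pm t x y : 0 < pm <= /2 ->
  pm <= Q pm (Some t) x y /\
  (Bool.eqb x t = true -> /2 <= Q pm (Some t) x y) /\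
  (Bool.eqb x t = true -> Bool.eqb y t = true -> 1 - pm <= Q pm (Some t) x y).
Proof.
  intros Hp. unfold Q, K, test, indicator.
  destruct t, x, y; simpl; repeat split; intros; try discriminate; lra.
Qed.

Lemma bounds pm (Hp : 0 < pm <= /2) : forall H u v,
  length u = length H -> length v = length H ->
  pm ^ (ord H) <= Sv pm H u v /\
  (matchesb H u = true -> (/2) ^ (ord H) <= Sv pm H u v) /\
  (matchesb H u = true -> matchesb H v = true -> (1 - pm) ^ (ord H) <= Sv pm H u v).
Proof.
  induction H as [|h H IH]; intros u v Hu Hv.
  - rewrite Sv_nil. unfold ord; simpl. lra.
  - destruct u as [|x u]; [discriminate|]. destruct v as [|y v]; [discriminate|].
    simpl in Hu, Hv. injection Hu as Hu. injection Hv as Hv.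
    destruct (IH u v Hu Hv) as [A [B C]].
    rewrite Sv_step.
    assert (P0 : 0 <= pm ^ ord H) by (apply pow_le; lra).
    assert (P1 : 0 <= (/2) ^ ord H) by (apply pow_le; lra).
    assert (P2 : 0 <= (1 - pm) ^ ord H) by (apply pow_le; lra).
    destruct h as [t|].
    + destruct (Q_some pm t x y Hp) as [Q1 [Q2 Q3]].
      unfold ord; simpl; fold (ord H). cbn [matchesb].
      repeat split.
      * apply Rmult_le_compat; lra.
      * intros Hm. apply andb_prop in Hm as [Hm1 Hm2].
        specialize (B Hm2). specialize (Q2 Hm1). apply Rmult_le_compat; lra.
      * intros Hm Hm'. apply andb_prop in Hm as [Hm1 Hm2].
        apply andb_prop in Hm' as [Hm1' Hm2'].
        specialize (C Hm2 Hm2'). specialize (Q3 Hm1 Hm1'). apply Rmult_le_compat; lra.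
    + rewrite Q_none. unfold ord; simpl; fold (ord H). cbn [matchesb]. simpl.
      rewrite Rmult_1_l. repeat split; intros; try lra; [apply B| apply C]; auto.
Qed.

Theorem corollary3p4 (d : nat) (pop : list model) (f : model -> R) (pm : R) (H : schema) :
  (1 <= length pop)%nat ->
  Forall (fun u => length u = d) pop ->
  length H = d ->
  0 < pm <= / 2 ->
  alpha d pm f pop H >=
    (1 - pm) ^ ord H * (alpha_sel f pop H) ^ 2
    + (/ 2) ^ ord H * alpha_sel f pop H * (1 - alpha_sel f pop H)
    + (1 - alpha_sel f pop H) ^ 2 * pm ^ ord H.
Proof.
  intros Hn Hall HH Hp. subst d.
  set (idx := seq 0 (length pop)).
  set (w := sel_weight f pop).
  set (i := fun k => indicator (matchesb H (nth k pop []))).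
  set (D := sumR (map (fun i => exp (f (nth i pop []) / 2)) idx)).
  assert (HD : 0 < D).
  { unfold D. apply sumR_pos. intros; apply exp_pos.
    unfold idx. destruct pop; simpl in *; [lia| discriminate]. }
  assert (Hw : forall k, 0 <= w k).
  { intros k. unfold w, sel_weight. fold idx. fold D.
    apply Rlt_le, Rdiv_lt_0_compat; [apply exp_pos| exact HD]. }
  assert (HW : sumR (map w idx) = 1).
  { rewrite (sumR_scale_ext _ _ (fun i => exp (f (nth i pop []) / 2)) (/ D)).
    - fold D. field. lra.
    - intros k. unfold w, sel_weight. fold idx. fold D. unfold Rdiv. ring. }
  assert (Ha : alpha_sel f pop H = sumR (map (fun k => i k * w k) idx)).
  { unfold alpha_sel. fold idx. f_equal. apply map_ext. intros k.
    unfold i, indicator. fold w. destruct (matchesb H (nth k pop [])); ring. }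
  assert (Ha0 : 0 <= alpha_sel f pop H).
  { rewrite Ha. rewrite <- (Rmult_0_l (sumR (map w idx))).
    rewrite <- (sumR_scale_ext idx (fun _ => 0) w 0) by (intros; ring).
    apply sumR_le. intros k _. unfold i, indicator.
    destruct (matchesb H (nth k pop [])); specialize (Hw k); lra. }
  assert (Ha1 : alpha_sel f pop H <= 1).
  { rewrite Ha, <- HW. apply sumR_le. intros k _. unfold i, indicator.
    destruct (matchesb H (nth k pop [])); specialize (Hw k); lra. }
  set (P1 := (1 - pm) ^ ord H). set (P2 := (/2) ^ ord H). set (P3 := pm ^ ord H).
  assert (P3pos : 0 <= P3) by (apply pow_le; lra).
  set (B := fun k l => i k * i l * P1 + i k * (1 - i l) * P2 + (1 - i k) * P3).
  assert (E : sumR (map (fun k => sumR (map (fun l => w k * w l * B k l) idx)) idx)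
              = P1 * (alpha_sel f pop H) ^ 2 + P2 * alpha_sel f pop H * (1 - alpha_sel f pop H)
                + P3 * (1 - alpha_sel f pop H)).
  { rewrite (sumR_lin2 idx _ (fun k => i k * w k) w
               ((P1 - P2) * alpha_sel f pop H + P2 - P3) P3).
    - rewrite <- Ha, HW. ring.
    - intros k _.
      rewrite (sumR_lin2 idx _ (fun l => i l * w l) w (w k * i k * (P1 - P2))
                 (w k * i k * P2 + w k * (1 - i k) * P3)).
      + rewrite <- Ha, HW. ring.
      + intros; unfold B; ring. }
  assert (Main : sumR (map (fun k => sumR (map (fun l => w k * w l * B k l) idx)) idx)
                 <= alpha (length H) pm f pop H).
  { unfold alpha. fold idx. apply sumR_le. intros k Hk. apply sumR_le. intros l Hl.
    apply in_seq in Hk, Hl.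
    assert (Lk : length (nth k pop []) = length H).
    { rewrite Forall_forall in Hall. apply Hall, nth_In. lia. }
    assert (Ll : length (nth l pop []) = length H).
    { rewrite Forall_forall in Hall. apply Hall, nth_In. lia. }
    rewrite (sumR_scale_ext _ _ (inner pm H (nth k pop []) (nth l pop [])) (w k * w l)).
    2:{ intros m. unfold inner.
        apply sumR_scale_ext. intros z. fold w. ring. }
    fold (Sv pm H (nth k pop []) (nth l pop [])).
    apply Rmult_le_compat_l.
    { pose proof (Hw k); pose proof (Hw l); nra. }
    destruct (bounds pm Hp H _ _ Lk Ll) as [A [Bb C]].
    unfold B, i, indicator.
    destruct (matchesb H (nth k pop [])) eqn:Mk, (matchesb H (nth l pop [])) eqn:Ml.
    - specialize (C eq_refl eq_refl). unfold P1; lra.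
    - specialize (Bb eq_refl). unfold P2; lra.
    - unfold P3; lra.
    - unfold P3; lra. }
  apply Rle_ge. rewrite E in Main.
  assert (P3 * (1 - alpha_sel f pop H) ^ 2 <= P3 * (1 - alpha_sel f pop H)).
  { apply Rmult_le_compat_l; [lra|]. nra. }
  fold P1 P2 P3. nra.
Qed.
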